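(* Let $\Omega\subset\mathbb R^d$ be a bounded open set, $L>0$, $n\in\mathbb Z_+$, $X=\overline\Omega\times[-L,L]^n$, $\varepsilon>0$, $N\in\mathbb N$, and points $\bar x_1,\dots,\bar x_N\in\Omega$. Suppose $G_n,G:\mathcal P(X)\to\mathcal P(X)$ satisfy $\lim_{n\to\infty}W_1(G_n(\mu),G(\mu))=0$ for all $\mu\in\mathcal P(X)$. Then for each $h\in C(\overline\Omega;[-L,L]^n)$, $$\mathbf F_\varepsilon\circ G\circ\mathbf M_N(h)=\lim_{n\to\infty}\mathbf F_\varepsilon\circ G_n\circ\mathbf M_N(h),$$ with convergence in $C(\overline\Omega;\mathbb R^n)$ (hence also in $H^{-s}(\Omega;\mathbb R^n)$ for every $s\ge0$). The same holds with $(G_n)_n$ replaced by a family $(G_\eta)_{\eta>0}$ and $n\to\infty$ replaced by $\eta\to0$.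
   Context: $\mathcal P(X)$: Borel probability measures with the $W_1$ metric. $\mathbf M_N(h)=\frac1N\sum_{j=1}^N\delta_{(\bar x_j,h(\bar x_j))}$. With $\rho\in C_c^\infty(\mathbb R^d)$ a mollifier ($\int\rho=1$, $\mathrm{supp}\,\rho\subset B(0,1)$, $\rho$ even), $(\mathbf F_\varepsilon\gamma)(x)=\frac{\mathrm{vol}(\Omega)}{\varepsilon^d}\int_X\rho(\frac{x'-x}{\varepsilon})\,y'\,d\gamma(x',y')$, $x\in\overline\Omega$. *)

(* Defs.v *)
From HB Require Import structures.
From mathcomp Require Import all_boot all_order all_algebra.
From mathcomp Require Import all_classical all_reals all_analysis.
Set Implicit Arguments. Unset Strict Implicit. Unset Printing Implicit Defensive.
Import Order.TTheory GRing.Theory Num.Theory.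
Import numFieldNormedType.Exports.
Local Open Scope classical_set_scope.
Local Open Scope ring_scope.

Definition BorelT (T : topologicalType) := g_sigma_algebraType (@open T).

Definition Amb (R : realType) (d n : nat) :=
  BorelT ('rV[R]_d * 'rV[R]_n)%type.

Definition eucl2 (R : realType) (k : nat) (v : 'rV[R]_k) : R :=
  \sum_(i < k) v ord0 i ^+ 2.

Definition edist (R : realType) (d n : nat) (z w : Amb R d n) : R :=
  Num.sqrt (eucl2 (z.1 - w.1) + eucl2 (z.2 - w.2)).

Definition Xset (R : realType) (d n : nat) (Om : set 'rV[R]_d) (L : R)
  : set (Amb R d n) :=
  [set z : Amb R d n | closure Om (z : 'rV[R]_d * 'rV[R]_n).1 /\
     forall i : 'I_n, - L <= (z : 'rV[R]_d * 'rV[R]_n).2 ord0 i <= L].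

Arguments Xset {R d} n Om L.

(* P(X): Borel probability measures on the ambient space concentrated on X. *)
Definition PX (R : realType) (d n : nat) (Om : set 'rV[R]_d) (L : R) :=
  {mu : probability (Amb R d n) R | mu (~` Xset n Om L) = 0%E}.

Definition coupling (R : realType) (d n : nat) (mu nu : probability (Amb R d n) R)
  (pi : probability (Amb R d n * Amb R d n)%type R) : Prop :=
  (forall A, measurable A -> pi (A `*` setT) = mu A) /\
  (forall B, measurable B -> pi (setT `*` B) = nu B).

Definition W1 (R : realType) (d n : nat) (mu nu : probability (Amb R d n) R)
  : \bar R :=
  ereal_inf [set c | exists pi : probability (Amb R d n * Amb R d n)%type R,
     coupling mu nu pi /\ c = (\int[pi]_z (edist z.1 z.2)%:E)%E].

Definition is_empirical (R : realType) (d n N : nat) (xbar : 'I_N -> 'rV[R]_d)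
  (h : 'rV[R]_d -> 'rV[R]_n) (mu : probability (Amb R d n) R) : Prop :=
  forall A : set (Amb R d n), measurable A ->
    mu A = ((N%:R)^-1%:E * \sum_(j < N) \d_((xbar j, h (xbar j)) : Amb R d n) A)%E.

Fixpoint iter_dir (R : realType) (V : normedModType R) (vs : seq V)
  (f : V -> R) : V -> R :=
  match vs with
  | [::] => f
  | v :: vs' => fun x => derive (iter_dir vs' f) x v
  end.

Definition smooth (R : realType) (V : normedModType R) (f : V -> R) : Prop :=
  forall vs : seq V, continuous (iter_dir vs f) /\
    forall (x v : V), derivable (iter_dir vs f) x v.

Definition is_lebesgue (R : realType) (d : nat)
  (lam : {measure set (BorelT 'rV[R]_d) -> \bar R}) : Prop :=
  forall a b : 'I_d -> R, (forall i, a i <= b i) ->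
    lam [set x | forall i, a i <= x ord0 i <= b i] = (\prod_(i < d) (b i - a i))%:E.

Definition mollifier (R : realType) (d : nat)
  (lam : {measure set (BorelT 'rV[R]_d) -> \bar R}) (rho : 'rV[R]_d -> R) : Prop :=
  smooth rho /\
  compact (closure [set x | rho x != 0]) /\
  (\int[lam]_x (rho x)%:E = 1)%E /\
  closure [set x | rho x != 0] `<=` [set x | eucl2 x < 1] /\
  (forall x, rho (- x) = rho x).

Definition Feps (R : realType) (d n : nat)
  (lam : {measure set (BorelT 'rV[R]_d) -> \bar R}) (Om : set 'rV[R]_d) (L : R)
  (rho : 'rV[R]_d -> R) (eps : R) (gam : probability (Amb R d n) R)
  (x : 'rV[R]_d) : 'rV[R]_n :=
  \row_i (fine (lam Om) / eps ^+ d *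
          Rintegral gam (Xset n Om L)
            (fun z => rho (eps^-1 *: (z.1 - x)) * z.2 ord0 i)).

(* Main.v *)
Require Import Defs.
From HB Require Import structures.
From mathcomp Require Import all_boot all_order all_algebra.
From mathcomp Require Import all_classical all_reals all_analysis.
From mathcomp Require Import measurable_realfun.
From mathcomp Require Import ring lra.
Import Order.TTheory GRing.Theory Num.Theory.
Import numFieldNormedType.Exports.
Local Open Scope classical_set_scope.
Local Open Scope ring_scope.
Lemma cont_meas (R : realType) (d n : nat) (f : 'rV[R]_d * 'rV[R]_n -> R) :
  continuous f -> measurable_fun [set: Amb R d n] f.
Proof.
move=> /continuousP cf.
apply: (measurability _ (measurable_realfun.RGenOpens.measurableE R)).
move=> _ [_ [a [b ->]] <-].
apply: sub_sigma_algebra.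
rewrite setTI; apply: cf; exact: interval_open.
Qed.

Lemma open_meas (R : realType) (d n : nat) (A : set ('rV[R]_d * 'rV[R]_n)) :
  open A -> measurable (A : set (Amb R d n)).
Proof. by move=> oA; apply: sub_sigma_algebra. Qed.

Lemma closed_meas (R : realType) (d n : nat) (A : set ('rV[R]_d * 'rV[R]_n)) :
  closed A -> measurable (A : set (Amb R d n)).
Proof.
move=> cA; rewrite -(setCK A); apply: measurableC; apply: open_meas.
by apply: closed_openC.
Qed.
Lemma fst_cont (R : realType) (d n : nat) :
  continuous (fun z : 'rV[R]_d * 'rV[R]_n => z.1).
Proof. by move=> z; apply: cvg_fst. Qed.
Lemma snd_cont (R : realType) (d n : nat) :
  continuous (fun z : 'rV[R]_d * 'rV[R]_n => z.2).
Proof. by move=> z; apply: cvg_snd. Qed.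
Lemma coord2_cont (R : realType) (d n : nat) (i : 'I_n) :
  continuous (fun z : 'rV[R]_d * 'rV[R]_n => z.2 ord0 i).
Proof.
move=> z.
exact: (@continuous_comp _ _ _ (fun z : 'rV[R]_d * 'rV[R]_n => z.2) (fun v : 'rV[R]_n => v ord0 i) z (@snd_cont R d n z) (@coord_continuous R 1 n ord0 i _)).
Qed.

Lemma Xset_closed (R : realType) (d n : nat) (Om : set 'rV[R]_d) (L : R) :
  closed (Xset n Om L : set ('rV[R]_d * 'rV[R]_n)).
Proof.
have -> : (Xset n Om L : set ('rV[R]_d * 'rV[R]_n)) =
  ((fun z : 'rV[R]_d * 'rV[R]_n => z.1) @^-1` closure Om) `&`
  \bigcap_(i in setT) ((fun z : 'rV[R]_d * 'rV[R]_n => z.2 ord0 i) @^-1` `[-L, L]).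
  apply/seteqP; split => z /=.
    move=> [h1 h2]; split => // i _ /=; rewrite in_itv /=; exact: h2.
  by move=> [h1 h2]; split => // i; have := h2 i I; rewrite /= in_itv.
apply: closedI.
  apply: preimage_closed; last exact: closed_closure.
  by move=> z _; apply: fst_cont.
apply: closed_bigI => i _; apply: preimage_closed; last exact: itv_closed.
by move=> z _; apply: coord2_cont.
Qed.

Lemma Xset_meas (R : realType) (d n : nat) (Om : set 'rV[R]_d) (L : R) :
  measurable (Xset n Om L : set (Amb R d n)).
Proof. by apply: closed_meas; exact: Xset_closed. Qed.
Lemma coord1_cont (R : realType) (d n : nat) (i : 'I_d) :
  continuous (fun z : 'rV[R]_d * 'rV[R]_n => z.1 ord0 i).
Proof.
move=> z.
exact: (@continuous_comp _ _ _ (fun z : 'rV[R]_d * 'rV[R]_n => z.1) (fun v : 'rV[R]_d => v ord0 i) z (@fst_cont R d n z) (@coord_continuous R 1 d ord0 i _)).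
Qed.

Lemma edist_meas (R : realType) (d n : nat) :
  measurable_fun [set: Amb R d n * Amb R d n] (fun z => @Defs.edist R d n z.1 z.2).
Proof.
have c1 j : measurable_fun [set: Amb R d n * Amb R d n]
   (fun z => (z.1 : 'rV[R]_d * 'rV[R]_n).1 ord0 j).
  exact: (@measurableT_comp _ _ _ _ _ _ (fun w : Amb R d n => (w : 'rV[R]_d * 'rV[R]_n).1 ord0 j) setT fst (@cont_meas R d n _ (@coord1_cont R d n j)) measurable_fst).
have c2 j : measurable_fun [set: Amb R d n * Amb R d n]
   (fun z => (z.2 : 'rV[R]_d * 'rV[R]_n).1 ord0 j).
  exact: (@measurableT_comp _ _ _ _ _ _ (fun w : Amb R d n => (w : 'rV[R]_d * 'rV[R]_n).1 ord0 j) setT snd (@cont_meas R d n _ (@coord1_cont R d n j)) measurable_snd).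
have c3 j : measurable_fun [set: Amb R d n * Amb R d n]
   (fun z => (z.1 : 'rV[R]_d * 'rV[R]_n).2 ord0 j).
  exact: (@measurableT_comp _ _ _ _ _ _ (fun w : Amb R d n => (w : 'rV[R]_d * 'rV[R]_n).2 ord0 j) setT fst (@cont_meas R d n _ (@coord2_cont R d n j)) measurable_fst).
have c4 j : measurable_fun [set: Amb R d n * Amb R d n]
   (fun z => (z.2 : 'rV[R]_d * 'rV[R]_n).2 ord0 j).
  exact: (@measurableT_comp _ _ _ _ _ _ (fun w : Amb R d n => (w : 'rV[R]_d * 'rV[R]_n).2 ord0 j) setT snd (@cont_meas R d n _ (@coord2_cont R d n j)) measurable_snd).
have -> : (fun z : Amb R d n * Amb R d n => @Defs.edist R d n z.1 z.2) =
  (@Num.sqrt R) \o (fun z : Amb R d n * Amb R d n =>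
     \sum_(i < d) ((z.1 : 'rV[R]_d * 'rV[R]_n).1 ord0 i - (z.2 : 'rV[R]_d * 'rV[R]_n).1 ord0 i) ^+ 2 +
     \sum_(i < n) ((z.1 : 'rV[R]_d * 'rV[R]_n).2 ord0 i - (z.2 : 'rV[R]_d * 'rV[R]_n).2 ord0 i) ^+ 2).
  apply/funext => z; rewrite /edist /eucl2 /=; congr (Num.sqrt (_ + _));
    by apply: eq_bigr => i _; rewrite !mxE.
apply: measurableT_comp; first exact: continuous_measurable_fun (@sqrt_continuous R).
apply: measurable_funD; apply: measurable_sum => i; apply: measurable_funX;
  apply: measurable_funB => //.
Qed.
Lemma marg1 (R : realType) (d n : nat) (mu : probability (Amb R d n) R)
  (pi : probability (Amb R d n * Amb R d n)%type R)
  (H : forall A, measurable A -> pi (A `*` setT) = mu A)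
  (g : Amb R d n -> R) (mg : measurable_fun setT g) (M : R) (gM : forall z, `|g z| <= M) :
  (\int[mu]_z (g z)%:E = \int[pi]_z (g z.1)%:E)%E.
Proof.
have mgE : measurable_fun setT (EFin \o g) by apply/measurable_EFinP.
have int1 : pi.-integrable (fst @^-1` setT) ((EFin \o g) \o fst).
  rewrite preimage_setT.
  apply: (measurable_bounded_integrable (f := g \o fst)).
  - exact: measurableT.
  - apply: (le_lt_trans (probability_le1 pi measurableT)); exact: ltry.
  - exact: measurableT_comp.
  - exists M; split; rewrite ?num_real // => x Mx y _ /=.
    by rewrite (le_trans _ (ltW Mx)).
have := integral_pushforward (@measurable_fst _ _ (Amb R d n) (Amb R d n)) mgE int1 measurableT.
rewrite preimage_setT => <-.
apply: eq_measure_integral => A mA _.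
etransitivity; first exact: (esym (H A mA)).
rewrite /pushforward.
by congr (pi _); apply/seteqP; split => z /=; [case|move=> ?; split].
Qed.
Arguments marg1 {R d n mu pi} H {g} mg {M} gM.
Lemma marg2 (R : realType) (d n : nat) (mu : probability (Amb R d n) R)
  (pi : probability (Amb R d n * Amb R d n)%type R)
  (H : forall A, measurable A -> pi (setT `*` A) = mu A)
  (g : Amb R d n -> R) (mg : measurable_fun setT g) (M : R) (gM : forall z, `|g z| <= M) :
  (\int[mu]_z (g z)%:E = \int[pi]_z (g z.2)%:E)%E.
Proof.
have mgE : measurable_fun setT (EFin \o g) by apply/measurable_EFinP.
have int1 : pi.-integrable (snd @^-1` setT) ((EFin \o g) \o snd).
  rewrite preimage_setT.
  apply: (measurable_bounded_integrable (f := g \o snd)).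
  - exact: measurableT.
  - apply: (le_lt_trans (probability_le1 pi measurableT)); exact: ltry.
  - exact: measurableT_comp.
  - exists M; split; rewrite ?num_real // => x Mx y _ /=.
    by rewrite (le_trans _ (ltW Mx)).
have := integral_pushforward (@measurable_snd _ _ (Amb R d n) (Amb R d n)) mgE int1 measurableT.
rewrite preimage_setT => <-.
apply: eq_measure_integral => A mA _.
etransitivity; first exact: (esym (H A mA)).
rewrite /pushforward.
by congr (pi _); apply/seteqP; split => z /=; [case|move=> ?; split].
Qed.

Arguments marg2 {R d n mu pi} H {g} mg {M} gM.
Lemma bdd_int (R : realType) (d n : nat)
  (pi : probability (Amb R d n * Amb R d n)%type R) (h : Amb R d n * Amb R d n -> R)
  (mh : measurable_fun setT h) (M : R) (hM : forall z, `|h z| <= M) :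
  pi.-integrable setT (EFin \o h).
Proof.
apply: (measurable_bounded_integrable (f := h)).
- exact: measurableT.
- apply: (le_lt_trans (probability_le1 pi measurableT)); exact: ltry.
- exact: mh.
- exists M; split; rewrite ?num_real // => x Mx y _ /=.
  by rewrite (le_trans _ (ltW Mx)).
Qed.

Arguments bdd_int {R d n pi h} mh {M} hM.
Lemma transport (R : realType) (d n : nat) (mu nu : probability (Amb R d n) R)
  (pi : probability (Amb R d n * Amb R d n)%type R)
  (Hc : coupling mu nu pi) (g : Amb R d n -> R) (mg : measurable_fun setT g) (M a b c : R)
  (a0 : 0 <= a) (b0 : 0 <= b) (gM : forall z, `|g z| <= M)
  (Hg : forall z w : Amb R d n, `|g z - g w| <= a + b * @Defs.edist R d n z w)
  (Hcost : (\int[pi]_z (@Defs.edist R d n z.1 z.2)%:E)%E = c%:E) :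
  `| fine (\int[mu]_z (g z)%:E)%E - fine (\int[nu]_z (g z)%:E)%E | <= a + b * c.
Proof.
case: Hc => H1 H2.
rewrite (marg1 H1 mg gM) (marg2 H2 mg gM).
have m1 : measurable_fun setT (fun z : Amb R d n * Amb R d n => g z.1) by exact: measurableT_comp.
have m2 : measurable_fun setT (fun z : Amb R d n * Amb R d n => g z.2) by exact: measurableT_comp.
have i1 := bdd_int (pi:=pi) m1 (fun z => gM z.1).
have i2 := bdd_int (pi:=pi) m2 (fun z => gM z.2).
have mE := @edist_meas R d n.
have e0 : forall z : Amb R d n * Amb R d n, 0 <= @Defs.edist R d n z.1 z.2.
  by move=> z; rewrite /Defs.edist sqrtr_ge0.
have IF : (\int[pi]_z ((a + b * @Defs.edist R d n z.1 z.2)%:E))%E = (a + b * c)%:E.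
  under eq_integral do rewrite EFinD EFinM.
  rewrite ge0_integralD //.
  - rewrite ge0_integralZl_EFin //.
    + rewrite Hcost integral_cst //.
      have P1 : pi [set: (Amb R d n * Amb R d n)%type] = 1%E by exact: probability_setT.
      apply: (@eq_trans _ _ (a%:E * 1 + b%:E * c%:E)%E).
        by congr (_ * _ + _)%E; exact: P1.
      by rewrite mule1 -EFinM -EFinD.
    + by move=> z _; rewrite lee_fin.
    + exact/measurable_EFinP.
  - by move=> z _; rewrite -EFinM lee_fin mulr_ge0.
  - apply/measurable_EFinP; apply: measurable_funM => //.
have iF : pi.-integrable setT (fun z => (a + b * @Defs.edist R d n z.1 z.2)%:E).
  apply/integrableP; split.
    apply/measurable_EFinP; apply: measurable_funD => //; apply: measurable_funM => //.
  under eq_integral do rewrite gee0_abs ?lee_fin ?addr_ge0 ?mulr_ge0 //.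
  by rewrite IF ltry.
have F1 := integrable_fin_num measurableT i1.
have F2 := integrable_fin_num measurableT i2.
have le1 : (\int[pi]_z (g z.1)%:E <= \int[pi]_z (g z.2)%:E + (a + b * c)%:E)%E.
  rewrite -IF -integralD //.
  apply: le_integral => //; first exact: integrableD.
  move=> z _; rewrite -EFinD lee_fin.
  have := Hg z.1 z.2; rewrite ler_norml => /andP[_ h]; lra.
have le2 : (\int[pi]_z (g z.2)%:E <= \int[pi]_z (g z.1)%:E + (a + b * c)%:E)%E.
  rewrite -IF -integralD //.
  apply: le_integral => //; first exact: integrableD.
  move=> z _; rewrite -EFinD lee_fin.
  have := Hg z.1 z.2; rewrite ler_norml => /andP[h _]; lra.
move: le1 le2 F1 F2.
case: (\int[pi]_z (g z.1)%:E)%E => // r1; case: (\int[pi]_z (g z.2)%:E)%E => // r2.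
rewrite /= -!EFinD !lee_fin => le1 le2 _ _.
rewrite ler_norml; apply/andP; split; lra.
Qed.
Lemma unif_cont (R : realType) (d : nat) (f : 'rV[R]_d -> R) (K : set 'rV[R]_d)
  (cK : compact K) (cf : continuous f) (f0 : forall x, ~ K x -> f x = 0)
  (e : R) (e0 : 0 < e) :
  exists2 del, 0 < del & forall u v, `|u - v| < del -> `|f u - f v| < e.
Proof.
have e20 : 0 < e / 2 by rewrite divr_gt0.
have Hn := (compact_near_coveringP K).1 cK R (0 : R)^'+
   (fun del y => forall z, `|y - z| < del -> `|f y - f z| < e) _.
have {}Hn : \forall del \near (0 : R)^'+, K `<=` (fun y => forall z, `|y - z| < del -> `|f y - f z| < e).
  apply: Hn => x Kx.
  have /cvgrPdist_lt/(_ _ e20) := cf x.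
  move=> /nbhs_ballP [r /= r0 Hr].
  have r20 : 0 < r / 2 by rewrite divr_gt0.
  exists (ball x (r / 2), [set del | del < r / 2]) => /=.
    split; first exact: nbhsx_ballx.
    exact: nbhs_right_lt.
  move=> [y del] /= [yB dl] z yz.
  have xy : `|x - y| < r / 2 by move: yB; rewrite -ball_normE.
  have h1 : `|f x - f y| < e / 2 by apply: Hr; rewrite -ball_normE /= (lt_trans xy) // ltr_pdivrMr // ltr_pMr // ltr1n.
  have xz : `|x - z| < r.
    rewrite (le_lt_trans (ler_distD y _ _)) //.
    by rewrite [r]splitr ltrD // (lt_trans yz).
  have h2 : `|f x - f z| < e / 2 by apply: Hr; rewrite -ball_normE.
  rewrite (le_lt_trans (ler_distD (f x) _ _)) // [e]splitr ltrD //.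
  by rewrite distrC.
have [del [del0 Hd]] := filter_ex (filterI (nbhs_right_gt (0 : R)) Hn).
exists del => // u v uv.
have [Ku|nKu] := pselect (K u); first exact: Hd.
have [Kv|nKv] := pselect (K v).
  by rewrite distrC; apply: Hd => //; rewrite distrC.
by rewrite !f0 // subrr normr0.
Qed.
Lemma cont_bdd (R : realType) (d : nat) (f : 'rV[R]_d -> R) (K : set 'rV[R]_d)
  (cK : compact K) (cf : continuous f) (f0 : forall x, ~ K x -> f x = 0) :
  exists M, 0 <= M /\ forall u, `|f u| <= M.
Proof.
have cfK : compact [set f x | x in K].
  by apply: continuous_compact => //; exact: continuous_subspaceT.
have [M [_ HM]] := compact_bounded cfK.
exists (`|M| + 1); split; first by rewrite addr_ge0.
move=> u; have [Ku|nKu] := pselect (K u).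
  apply: (HM (`|M| + 1)); last by exists u.
  by rewrite (le_lt_trans (ler_norm M)) // ltrDl.
by rewrite f0 // normr0 addr_ge0.
Qed.
Definition clampL (R : realType) (L : R) (t : R) : R := Order.max (- L) (Order.min t L).
Arguments clampL {R}.

Lemma clampE (R : realType) (L t : R) : 0 <= L ->
  clampL L t = if t < - L then - L else if L < t then L else t.
Proof.
move=> L0; rewrite /clampL.
by case: (leP t L) => tL; case: (leP (- L) t) => h; case: (leP (- L) L) => h';
  case: (ltP t (- L)) => h1; case: (ltP L t) => h2; lra.
Qed.

Lemma clamp_norm (R : realType) (L t : R) : 0 <= L -> `|clampL L t| <= L.
Proof.
move=> L0; rewrite clampE // ler_norml.
by case: ltP => h1; [|case: ltP => h2]; apply/andP; split; lra.
Qed.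

Lemma clamp_lip (R : realType) (L s t : R) : 0 <= L -> `|clampL L s - clampL L t| <= `|s - t|.
Proof.
move=> L0; rewrite !clampE //.
have H : forall x y : R, `|x - y| <= `|s - t| <-> (- `|s - t| <= x - y <= `|s - t|).
  by move=> x y; rewrite ler_norml.
apply/H.
have [st|st] := leP s t.
  rewrite (ler0_norm (_ : s - t <= 0)); last lra.
  by case: ltP => h1; case: ltP => h2; try case: ltP => h3; try case: ltP => h4; apply/andP; split; lra.
rewrite (gtr0_norm (_ : 0 < s - t)); last lra.
by case: ltP => h1; case: ltP => h2; try case: ltP => h3; try case: ltP => h4; apply/andP; split; lra.
Qed.

Lemma clamp_id (R : realType) (L t : R) : - L <= t <= L -> clampL L t = t.
Proof.
move=> /andP[h1 h2]; have L0 : 0 <= L by lra.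
by rewrite clampE //; case: ltP => h3; [lra|case: ltP => h4 //; lra].
Qed.
Lemma eucl2_ge0 (R : realType) (k : nat) (v : 'rV[R]_k) : 0 <= eucl2 v.
Proof. by apply: sumr_ge0 => i _; exact: sqr_ge0. Qed.

Lemma coord_le_eucl (R : realType) (k : nat) (v : 'rV[R]_k) (j : 'I_k) (s : R) :
  0 <= s -> `|v ord0 j| <= Num.sqrt (eucl2 v + s).
Proof.
move=> s0; rewrite -sqrtr_sqr; apply: ler_wsqrtr.
rewrite /eucl2 (bigD1 j) //= -addrA lerDl addr_ge0 //.
by apply: sumr_ge0 => i _; exact: sqr_ge0.
Qed.

Lemma mxnorm_le (R : realType) (k : nat) (v : 'rV[R]_k) (c : R) :
  0 <= c -> (forall j, `|v ord0 j| <= c) -> `|v| <= c.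
Proof.
move=> c0 H; rewrite [leLHS]/Num.norm /= mx_normrE; apply/bigmax_leP; split => //.
by move=> [i j] _ /=; rewrite (ord1 i).
Qed.

Lemma mxnorm_lt (R : realType) (k : nat) (v : 'rV[R]_k) (c : R) :
  0 < c -> (forall j, `|v ord0 j| < c) -> `|v| < c.
Proof.
move=> c0 H; rewrite [ltLHS]/Num.norm /= mx_normrE; apply/bigmax_ltP; split => //.
by move=> [i j] _ /=; rewrite (ord1 i).
Qed.

Lemma d1_le (R : realType) (d n : nat) (z w : Amb R d n) :
  `|(z : 'rV[R]_d * 'rV[R]_n).1 - (w : 'rV[R]_d * 'rV[R]_n).1| <= @Defs.edist R d n z w.
Proof.
apply: mxnorm_le; first exact: sqrtr_ge0.
move=> j; exact/coord_le_eucl/eucl2_ge0.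
Qed.

Lemma d2_le (R : realType) (d n : nat) (z w : Amb R d n) (i : 'I_n) :
  `|(z : 'rV[R]_d * 'rV[R]_n).2 ord0 i - (w : 'rV[R]_d * 'rV[R]_n).2 ord0 i| <= @Defs.edist R d n z w.
Proof.
rewrite /Defs.edist.
have := @coord_le_eucl R n ((z : 'rV[R]_d * 'rV[R]_n).2 - (w : 'rV[R]_d * 'rV[R]_n).2) i _ (@eucl2_ge0 R d ((z : 'rV[R]_d * 'rV[R]_n).1 - (w : 'rV[R]_d * 'rV[R]_n).1)).
rewrite !mxE => h; apply: (le_trans h); by rewrite addrC.
Qed.
Lemma rho_diff (R : realType) (d : nat) (rho : 'rV[R]_d -> R) (M del e' : R)
  (M0 : 0 <= M) (del0 : 0 < del) (HM : forall u, `|rho u| <= M)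
  (Hu : forall u v, `|u - v| < del -> `|rho u - rho v| < e') (e0 : 0 <= e') (u v : 'rV[R]_d) :
  `|rho u - rho v| <= e' + (2 * M / del) * `|u - v|.
Proof.
have k0 : 0 <= 2 * M / del by apply: divr_ge0; [apply: mulr_ge0|apply: ltW].
have n0 : 0 <= 2 * M / del * `|u - v| by rewrite mulr_ge0.
have [uv|uv] := ltP `|u - v| del.
  have := Hu _ _ uv; lra.
have h1 := HM u; have h2 := HM v.
have h3 : `|rho u - rho v| <= `|rho u| + `|rho v| by exact: ler_normB.
have h4 : 2 * M <= 2 * M / del * `|u - v|.
  apply: le_trans (ler_wpM2l k0 uv); rewrite divfK ?gt_eqF //.
lra.
Qed.

Lemma g_est (R : realType) (d n : nat) (rho : 'rV[R]_d -> R) (L eps : R) (x : 'rV[R]_d) (i : 'I_n)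
  (M del e' : R)
  (L0 : 0 <= L) (eps0 : 0 < eps)
  (M0 : 0 <= M) (del0 : 0 < del) (HM : forall u, `|rho u| <= M)
  (Hu : forall u v, `|u - v| < del -> `|rho u - rho v| < e') (e0 : 0 <= e') (z w : Amb R d n) :
  `| rho (eps^-1 *: ((z : 'rV[R]_d * 'rV[R]_n).1 - x)) * clampL L ((z : 'rV[R]_d * 'rV[R]_n).2 ord0 i)
   - rho (eps^-1 *: ((w : 'rV[R]_d * 'rV[R]_n).1 - x)) * clampL L ((w : 'rV[R]_d * 'rV[R]_n).2 ord0 i) |
  <= e' * L + (2 * M / del / eps * L + M) * @Defs.edist R d n z w.
Proof.
set u := eps^-1 *: _; set v := eps^-1 *: _.
set s := clampL L _; set t := clampL L _.
set E := Defs.edist _ _.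
have E0 : 0 <= E by rewrite /E /Defs.edist sqrtr_ge0.
have huv : `|u - v| <= E / eps.
  rewrite /u /v -scalerBr opprB addrA subrK normrZ ger0_norm; last by rewrite invr_ge0 ltW.
  rewrite mulrC; apply: ler_wpM2r; [by rewrite invr_ge0 ltW | exact: d1_le].
have A : `|rho u - rho v| <= e' + (2 * M / del / eps) * E.
  apply: (le_trans (@rho_diff R d rho M del e' M0 del0 HM Hu e0 u v)).
  rewrite lerD2l -[X in _ <= X]mulrA.
  apply: ler_wpM2l; first by apply: divr_ge0; [apply: mulr_ge0|apply: ltW].
  by rewrite mulrC.
have B : `|s| <= L by exact: clamp_norm.
have C : `|rho v| <= M by exact: HM.
have D : `|s - t| <= E.
  by apply: (le_trans (@clamp_lip R L _ _ L0)); exact: d2_le.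
have -> : rho u * s - rho v * t = (rho u - rho v) * s + rho v * (s - t) by ring.
apply: (le_trans (ler_normD _ _)); rewrite !normrM.
have k0 : 0 <= 2 * M / del / eps by apply: divr_ge0; [apply: divr_ge0; [apply: mulr_ge0|apply: ltW]|apply: ltW].
have P1 : `|rho u - rho v| * `|s| <= (e' + (2 * M / del / eps) * E) * L.
  by apply: ler_pM.
have P2 : `|rho v| * `|s - t| <= M * E by apply: ler_pM.
apply: (le_trans (lerD P1 P2)).
rewrite le_eqVlt; apply/orP; left; apply/eqP; ring.
Qed.
Definition gfun (R : realType) (d n : nat) (rho : 'rV[R]_d -> R) (L eps : R) (x : 'rV[R]_d) (i : 'I_n)
  (z : Amb R d n) : R :=
  rho (eps^-1 *: ((z : 'rV[R]_d * 'rV[R]_n).1 - x)) * clampL L ((z : 'rV[R]_d * 'rV[R]_n).2 ord0 i).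

Arguments gfun {R d n}.
Lemma gfun_meas (R : realType) (d n : nat) (rho : 'rV[R]_d -> R) (L eps : R) (x : 'rV[R]_d) (i : 'I_n)
  (rc : continuous rho) : measurable_fun setT (gfun rho L eps x i).
Proof.
have aff : continuous (fun v : 'rV[R]_d => eps^-1 *: (v - x)).
  move=> v; exact: (cvgZr (cvgB cvg_id (cvg_cst x))).
have c1 : continuous (fun z : 'rV[R]_d * 'rV[R]_n => rho (eps^-1 *: (z.1 - x))).
  move=> z; have h := (@continuous_comp _ _ _ (fun z : 'rV[R]_d * 'rV[R]_n => z.1)
     (fun v : 'rV[R]_d => rho (eps^-1 *: (v - x))) z (@fst_cont R d n z)
     (@continuous_comp _ _ _ (fun v : 'rV[R]_d => eps^-1 *: (v - x)) rho z.1 (aff z.1) (rc _))).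
  exact h.
apply: measurable_funM; first exact: (@cont_meas R d n _ c1).
rewrite /clampL; apply: measurable_maxr; first exact: measurable_cst.
apply: measurable_minr; last exact: measurable_cst.
exact: (@cont_meas R d n _ (@coord2_cont R d n i)).
Qed.

Lemma Rint_X (R : realType) (d n : nat) (Om : set 'rV[R]_d) (L : R)
  (mu : probability (Amb R d n) R) (Hmu : mu (~` Xset n Om L) = 0%E)
  (f g : Amb R d n -> R) (mg : measurable_fun setT g) (M : R) (gM : forall z, `|g z| <= M)
  (fg : forall z, Xset n Om L z -> f z = g z) :
  Rintegral mu (Xset n Om L) f = fine (\int[mu]_z (g z)%:E)%E.
Proof.
rewrite /Rintegral; congr fine.
rewrite (eq_integral (fun z => (g z)%:E)); last first.
  by move=> z; rewrite inE => Xz; rewrite fg.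
have intg : mu.-integrable setT (EFin \o g).
  apply: (measurable_bounded_integrable (f := g)).
  - exact: measurableT.
  - apply: (le_lt_trans (probability_le1 mu measurableT)); exact: ltry.
  - exact: mg.
  - exists M; split; rewrite ?num_real // => z Mz y _ /=.
    by rewrite (le_trans _ (ltW Mz)).
have mX := @Xset_meas R d n Om L.
rewrite [RHS](negligible_integral (N := ~` Xset n Om L) _ measurableT intg Hmu).
  by rewrite setTD setCK.
exact: measurableC.
Qed.
Lemma frac_le (R : realType) (X y : R) : 0 <= X -> 0 <= y -> X / (y + 1) * y <= X.
Proof.
move=> X0 y0; rewrite mulrAC ler_pdivrMr; last lra.
by rewrite ler_wpM2l //; lra.
Qed.

Lemma main_gen (R : realType) (d n : nat)
  (lam : {measure set (BorelT 'rV[R]_d) -> \bar R}) (rho : 'rV[R]_d -> R)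
  (Hrho : Defs.mollifier lam rho)
  (Om : set 'rV[R]_d) (L : R) (HL : 0 < L) (eps : R) (Heps : 0 < eps) (Mh : PX n Om L)
  (I : Type) (F : set_system I) (FF : Filter F)
  (Gs : I -> PX n Om L -> PX n Om L) (G : PX n Om L -> PX n Om L)
  (H : forall mu, (fun k => W1 (sval (Gs k mu)) (sval (G mu))) @ F --> 0%E)
  (e : R) (e0 : 0 < e) :
  \forall k \near F, forall x, closure Om x ->
       `| Feps lam Om L rho eps (sval (Gs k Mh)) x - Feps lam Om L rho eps (sval (G Mh)) x | < e.
Proof.
have [Hsm [Hcpt _]] := Hrho.
have rc : continuous rho := (Hsm [::]).1.
set K := closure [set x | rho x != 0].
have f0 : forall x, ~ K x -> rho x = 0.
  move=> x nK; apply/eqP; apply/negPn/negP => h; apply: nK; exact: subset_closure.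
have [Mr [Mr0 HMr]] := @cont_bdd R d rho K Hcpt rc f0.
set Kc := fine (lam Om) / eps ^+ d.
set C := `|Kc| + 1.
have C0 : 0 < C by rewrite /C; have := normr_ge0 Kc; lra.
set X := e / (4 * C).
have X0 : 0 < X by rewrite divr_gt0 // mulr_gt0.
set e' := X / (L + 1).
have e'0 : 0 < e' by rewrite divr_gt0 //; lra.
have [del del0 Hdel] := @unif_cont R d rho K Hcpt rc f0 e' e'0.
set b := 2 * Mr / del / eps * L + Mr.
have b0 : 0 <= b.
  rewrite /b; apply: addr_ge0 => //; apply: mulr_ge0; last lra.
  apply: divr_ge0; last lra; apply: divr_ge0; last lra; lra.
set t := X / (b + 1).
have t0 : 0 < t by rewrite divr_gt0 //; lra.
have nb : nbhs (0%R)%:E [set y | (y < t%:E)%E] := @nbhs_open_ereal_lt R 0 (fun=> t) t0.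
have Hn : \forall k \near F, (W1 (sval (Gs k Mh)) (sval (G Mh)) < t%:E)%E := H Mh _ nb.
apply: filterS Hn => k /= Wk x _.
case: (ereal_inf_lt Wk) => y [pi [Hcp ->]] yt.
have y0 : (0 <= \int[pi]_z (@Defs.edist R d n z.1 z.2)%:E)%E.
  by apply: integral_ge0 => z _; rewrite lee_fin sqrtr_ge0.
move: y0 yt.
case Ec: (\int[pi]_z (@Defs.edist R d n z.1 z.2)%:E)%E => [c| |] // c0 ct.
rewrite lee_fin in c0; rewrite lte_fin in ct.
apply: mxnorm_lt => // j.
rewrite !mxE.
have L0 : 0 <= L by lra.
have gM : forall z, `|gfun rho L eps x j z| <= Mr * L.
  by move=> z; rewrite /gfun normrM ler_pM // clamp_norm.
have gX : forall z, Xset n Om L z ->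
   rho (eps^-1 *: ((z : 'rV[R]_d * 'rV[R]_n).1 - x)) * (z : 'rV[R]_d * 'rV[R]_n).2 ord0 j = gfun rho L eps x j z.
  by move=> z [_ Hz]; rewrite /gfun (@clamp_id R L _ (Hz j)).
have mg := @gfun_meas R d n rho L eps x j rc.
rewrite (@Rint_X R d n Om L _ (svalP (Gs k Mh)) _ _ mg (Mr * L) gM gX).
rewrite (@Rint_X R d n Om L _ (svalP (G Mh)) _ _ mg (Mr * L) gM gX).
rewrite -mulrBr normrM.
have Hg := @g_est R d n rho L eps x j Mr del e' L0 Heps Mr0 del0 HMr Hdel (ltW e'0).
have T := @transport R d n _ _ pi Hcp _ mg (Mr * L) (e' * L) b c
  (mulr_ge0 (ltW e'0) L0) b0 gM Hg Ec.
set D := `| _ - _ | in T *.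
have h1 : e' * L <= X by apply: frac_le; lra.
have h2 : b * c <= X.
  apply: (le_trans (_ : _ <= b * t)); first by apply: ler_wpM2l => //; exact: ltW.
  by rewrite mulrC; apply: frac_le => //; exact: ltW.
have hD : D <= 2 * X by lra.
have h3 : `|Kc| * D <= `|Kc| * (2 * X) by apply: ler_wpM2l.
have h4 : X * (4 * C) = e by rewrite /X divfK // gt_eqF // mulr_gt0.
have h5 : 0 <= `|Kc| * X by rewrite mulr_ge0 // ltW.
have h6 : 4 * (`|Kc| * X) + 4 * X = e by rewrite -h4 /C; ring.
have h7 : `|Kc| * (2 * X) = 2 * (`|Kc| * X) by ring.
lra.
Qed.

Theorem propositionF1 (R : realType) (d n : nat)
  (lam : {measure set (BorelT 'rV[R]_d) -> \bar R}) (Hlam : is_lebesgue lam)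
  (rho : 'rV[R]_d -> R) (Hrho : mollifier lam rho)
  (Om : set 'rV[R]_d) (HOmo : open Om) (HOmb : bounded_set Om)
  (L : R) (HL : 0 < L) (HN : (0 < n)%N)
  (eps : R) (Heps : 0 < eps)
  (N : nat) (HN0 : (0 < N)%N)
  (xbar : 'I_N -> 'rV[R]_d) (Hxbar : forall j, Om (xbar j))
  (h : 'rV[R]_d -> 'rV[R]_n)
  (Hhc : {within closure Om, continuous h})
  (Hhb : forall x, closure Om x -> forall i, - L <= h x ord0 i <= L)
  (Mh : PX n Om L) (HMh : is_empirical xbar h (sval Mh)) :
  (forall (Gs : nat -> PX n Om L -> PX n Om L) (G : PX n Om L -> PX n Om L),
     (forall mu, (fun k => W1 (sval (Gs k mu)) (sval (G mu))) @ \oo --> 0%E) ->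
     forall e : R, 0 < e -> \forall k \near \oo, forall x, closure Om x ->
       `| Feps lam Om L rho eps (sval (Gs k Mh)) x
          - Feps lam Om L rho eps (sval (G Mh)) x | < e)
  /\
  (forall (Ge : R -> PX n Om L -> PX n Om L) (G : PX n Om L -> PX n Om L),
     (forall mu, (fun eta => W1 (sval (Ge eta mu)) (sval (G mu)))
                   @ 0^'+ --> 0%E) ->
     forall e : R, 0 < e -> \forall eta \near 0^'+, forall x, closure Om x ->
       `| Feps lam Om L rho eps (sval (Ge eta Mh)) x
          - Feps lam Om L rho eps (sval (G Mh)) x | < e).
Proof.
split.
  move=> Gs G HG e e0.
  exact: (@main_gen R d n lam rho Hrho Om L HL eps Heps Mh nat \oo _ Gs G HG e e0).
move=> Ge G HG e e0.
exact: (@main_gen R d n lam rho Hrho Om L HL eps Heps Mh R (0 : R)^'+ _ Ge G HG e e0).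
Qed.
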